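(* Let $d\ge1$ and let $(\alpha_0,\alpha_1,\dots)$ be a sequence of $d\times d$ complex matrices with $\|\alpha_i\|<1$, with associated block CMV matrices $\mathcal{C}=\mathcal{C}(\alpha_0,\alpha_1,\dots)$ and $\hat{\mathcal{C}}=\hat{\mathcal{C}}(\alpha_0,\alpha_1,\dots)$. Then for every $j\in\mathbb{N}$, $$\mathcal{C}=\begin{cases}(\mathbb{1}_j\oplus\mathcal{C}^{(j)})(\mathcal{C}_j\oplus\mathbb{1}_\infty), & j\text{ even},\\ (\mathcal{C}_j\oplus\mathbb{1}_\infty)(\mathbb{1}_j\oplus\hat{\mathcal{C}}^{(j)}), & j\text{ odd},\end{cases}\qquad \hat{\mathcal{C}}=\begin{cases}(\hat{\mathcal{C}}_j\oplus\mathbb{1}_\infty)(\mathbb{1}_j\oplus\hat{\mathcal{C}}^{(j)}), & j\text{ even},\\ (\mathbb{1}_j\oplus\mathcal{C}^{(j)})(\hat{\mathcal{C}}_j\oplus\mathbb{1}_\infty), & j\text{ odd},\end{cases}$$ where $\mathcal{C}_j=\mathcal{C}_j(\alpha_0,\dots,\alpha_{j-1})$, $\hat{\mathcal{C}}_j=\hat{\mathcal{C}}_j(\alpha_0,\dots,\alpha_{j-1})$, $\mathcal{C}^{(j)}=\mathcal{C}(\alpha_j,\alpha_{j+1},\dots)$ and $\hat{\mathcal{C}}^{(j)}=\hat{\mathcal{C}}(\alpha_j,\alpha_{j+1},\dots)$. (These are $V_j$-overlapping factorizations.)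
   Context: Let $\ell^2$ have canonical basis $\{e_i\}_{i\ge0}$ and canonical subspaces $V_m=\operatorname{span}\{e_{md},\dots,e_{md+d-1}\}$, $m\ge0$, so $\ell^2=\bigoplus_{m\ge0}V_m$. For a $d\times d$ matrix $\alpha$ with $\|\alpha\|\le1$ set $\rho^L=(\mathbb{1}-\alpha^\dagger\alpha)^{1/2}$, $\rho^R=(\mathbb{1}-\alpha\alpha^\dagger)^{1/2}$ and $\Theta(\alpha)=\begin{pmatrix}\alpha^\dagger&\rho^L\\ \rho^R&-\alpha\end{pmatrix}$ ($\mathbb{1}$ the $d\times d$ identity). Given $(\alpha_0,\alpha_1,\dots)$, let $\mathcal{L}=\Theta(\alpha_0)\oplus\Theta(\alpha_2)\oplus\Theta(\alpha_4)\oplus\cdots$ and $\mathcal{M}=\mathbb{1}\oplus\Theta(\alpha_1)\oplus\Theta(\alpha_3)\oplus\cdots$ (so that $\Theta(\alpha_i)$ acts on $V_i\oplus V_{i+1}$), and define the block CMV matrices $\mathcal{C}(\alpha_0,\alpha_1,\dots)=\mathcal{L}\mathcal{M}$, $\hat{\mathcal{C}}(\alpha_0,\alpha_1,\dots)=\mathcal{M}\mathcal{L}$. For $N\ge0$ and $(\alpha_0,\dots,\alpha_{N-1})$, the finite block CMV matrices acting on $V_0\oplus\cdots\oplus V_N$ are $\mathcal{C}_N=\mathcal{L}_N\mathcal{M}_N$ and $\hat{\mathcal{C}}_N=\mathcal{M}_N\mathcal{L}_N$, where for odd $N$: $\mathcal{L}_N=\Theta(\alpha_0)\oplus\Theta(\alpha_2)\oplus\cdots\oplus\Theta(\alpha_{N-1})$,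 $\mathcal{M}_N=\mathbb{1}\oplus\Theta(\alpha_1)\oplus\cdots\oplus\Theta(\alpha_{N-2})\oplus\mathbb{1}$; for even $N$: $\mathcal{L}_N=\Theta(\alpha_0)\oplus\cdots\oplus\Theta(\alpha_{N-2})\oplus\mathbb{1}$, $\mathcal{M}_N=\mathbb{1}\oplus\Theta(\alpha_1)\oplus\cdots\oplus\Theta(\alpha_{N-1})$ (with $\mathcal{C}_0=\hat{\mathcal C}_0=\mathbb{1}$). In the factorizations, $\mathcal{C}_j,\hat{\mathcal{C}}_j$ act on $V_0\oplus\cdots\oplus V_j$; $\mathcal{C}^{(j)},\hat{\mathcal{C}}^{(j)}$ act on $\bigoplus_{m\ge j}V_m$ (with $V_j$ in the role of the first block); $\mathbb{1}_j$ is the identity on $V_0\oplus\cdots\oplus V_{j-1}$ and $\mathbb{1}_\infty$ is the identity on $\bigoplus_{m>j}V_m$. *)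

(* Defs.v *)
From mathcomp Require Import all_boot all_algebra.
From mathcomp Require Import reals complex.
From Stdlib Require Import ClassicalEpsilon.
Set Implicit Arguments. Unset Strict Implicit. Unset Printing Implicit Defensive.
Import GRing.Theory Num.Theory.
Local Open Scope ring_scope.

Section BlockCMV.
Variable R : realType.
Local Notation C := (R[i]).
Variable d : nat.

Definition adj (A : 'M[C]_d) : 'M[C]_d := \matrix_(i, j) (A j i)^*.

Definition vnorm2 (v : 'cV[C]_d) : C := \sum_(i < d) `|v i 0| ^+ 2.

(* operator norm (w.r.t. the Euclidean norm) strictly less than 1:
   ||A|| = sup_{v<>0} |Av|/|v| <= c for some c < 1 *)
Definition opnorm_lt1 (A : 'M[C]_d) : Prop :=
  exists c : C, 0 <= c /\ c < 1 /\ forall v : 'cV[C]_d,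
      vnorm2 (A *m v) <= c ^+ 2 * vnorm2 v.

Definition vadj (v : 'cV[C]_d) : 'rV[C]_d := \matrix_(i, j) (v j i)^*.
Definition psd (P : 'M[C]_d) : Prop :=
  adj P = P /\ forall v : 'cV[C]_d, 0 <= (vadj v *m P *m v) 0 0.

(* the positive semidefinite square root A^{1/2} (for A psd it exists
   and is unique) *)
Definition msqrt (A : 'M[C]_d) : 'M[C]_d :=
  epsilon (inhabits 0) (fun P => psd P /\ P *m P = A).

Definition rhoL (a : 'M[C]_d) : 'M[C]_d := msqrt (1%:M - adj a *m a).
Definition rhoR (a : 'M[C]_d) : 'M[C]_d := msqrt (1%:M - a *m adj a).

(* A vector of l^2 = (+)_{m>=0} V_m, V_m = C^d, is represented by its
   block components x m in V_m; operators are maps on such sequences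
   (all operators below are block-banded so they act on all sequences). *)
Definition blockseq := nat -> 'cV[C]_d.

(* The block-diagonal operator which is Theta(A i) on V_i (+) V_(i+1)
   for every i with P i, and the identity on blocks not covered
   (the selected pairs {i, i+1} are assumed disjoint). *)
Definition thetas (A : nat -> 'M[C]_d) (P : pred nat) (x : blockseq) : blockseq :=
  fun m =>
    if P m then adj (A m) *m x m + rhoL (A m) *m x m.+1
    else if (0 < m)%N && P m.-1 then
      rhoR (A m.-1) *m x m.-1 - A m.-1 *m x m
    else x m.

Definition Lop (al : nat -> 'M[C]_d) : blockseq -> blockseq := thetas al (fun i => ~~ odd i).
Definition Mop (al : nat -> 'M[C]_d) : blockseq -> blockseq := thetas al (fun i => odd i).
Definition CMV (al : nat -> 'M[C]_d) : blockseq -> blockseq := fun x => Lop al (Mop al x).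
Definition CMVhat (al : nat -> 'M[C]_d) : blockseq -> blockseq := fun x => Mop al (Lop al x).

Definition fseq (N : nat) := 'I_N.+1 -> 'cV[C]_d.
Definition fext N (x : fseq N) : blockseq :=
  fun k => if (k <= N)%N then x (inord k) else 0.

(* finite L_N, M_N: Theta(alpha_i) on V_i (+) V_(i+1) for i even (resp. odd)
   with i+1 <= N, identity blocks otherwise (matches the definition for
   N odd / N even).  Only alpha_0 ... alpha_(N-1) are used. *)
Definition LopN N (al : nat -> 'M[C]_d) (x : fseq N) : fseq N :=
  fun i => thetas al (fun k => ~~ odd k && (k.+1 <= N)%N) (fext x) i.
Definition MopN N (al : nat -> 'M[C]_d) (x : fseq N) : fseq N :=
  fun i => thetas al (fun k => odd k && (k.+1 <= N)%N) (fext x) i.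
Definition CMVN N al : fseq N -> fseq N := fun x => LopN al (MopN al x).
Definition CMVNhat N al : fseq N -> fseq N := fun x => MopN al (LopN al x).

(* T (+) 1_oo : T acts on V_0 (+) ... (+) V_N, identity on V_m, m > N *)
Definition dsum_id N (T : fseq N -> fseq N) : blockseq -> blockseq :=
  fun x m => if (m <= N)%N then T (fun i : 'I_N.+1 => x i) (inord m) else x m.

(* 1_j (+) S : identity on V_0 ... V_(j-1), S acts on (+)_{m>=j} V_m
   with V_j in the role of the first block *)
Definition id_dsum j (S : blockseq -> blockseq) : blockseq -> blockseq :=
  fun x m => if (m < j)%N then x m else S (fun k => x (j + k)%N) (m - j)%N.

Definition shift j (al : nat -> 'M[C]_d) : nat -> 'M[C]_d := fun k => al (j + k)%N.

End BlockCMV.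

(* Main.v *)
Require Import Defs.
From mathcomp Require Import all_boot all_algebra.
From mathcomp Require Import reals complex zify.
From Stdlib Require Import FunctionalExtensionality.
Import GRing.Theory Num.Theory.
Local Open Scope ring_scope.

Section S.
Variable R : realType.
Variable d : nat.
Implicit Types (A : nat -> 'M[R[i]]_d) (x : blockseq R d) (P : pred nat).

Lemma thP A P x m : P m -> thetas A P x m = adj (A m) *m x m + rhoL (A m) *m x m.+1.
Proof. by rewrite /thetas => ->. Qed.
Lemma thQ A P x m : ~~ P m -> (0 < m)%N -> P m.-1 ->
  thetas A P x m = rhoR (A m.-1) *m x m.-1 - A m.-1 *m x m.
Proof. by rewrite /thetas => /negbTE -> -> ->. Qed.
Lemma thI A P x m : ~~ P m -> ~~ ((0 < m)%N && P m.-1) -> thetas A P x m = x m.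
Proof. by rewrite /thetas => /negbTE -> /negbTE ->. Qed.

Lemma fextE N (y : blockseq R d) k :
  fext (fun i : 'I_N.+1 => y i) k = if (k <= N)%N then y k else 0.
Proof. by rewrite /fext; case: ifP => // h; rewrite inordK. Qed.

Lemma dsumN N al x m : (m <= N)%N ->
  dsum_id (CMVN (N:=N) al) x m =
  thetas al (fun k => ~~ odd k && (k.+1 <= N)%N)
    (fun k => if (k <= N)%N then
       thetas al (fun k => odd k && (k.+1 <= N)%N) (fun k => if (k <= N)%N then x k else 0) k
       else 0) m.
Proof.
move=> hm; rewrite /dsum_id hm /CMVN /LopN inordK //.
congr thetas; apply: functional_extensionality => k.
rewrite /fext; case: ifP => // h; rewrite /MopN inordK //.
by congr thetas; apply: functional_extensionality => i; rewrite fextE.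
Qed.

Lemma dsumNh N al x m : (m <= N)%N ->
  dsum_id (CMVNhat (N:=N) al) x m =
  thetas al (fun k => odd k && (k.+1 <= N)%N)
    (fun k => if (k <= N)%N then
       thetas al (fun k => ~~ odd k && (k.+1 <= N)%N) (fun k => if (k <= N)%N then x k else 0) k
       else 0) m.
Proof.
move=> hm; rewrite /dsum_id hm /CMVNhat /MopN inordK //.
congr thetas; apply: functional_extensionality => k.
rewrite /fext; case: ifP => // h; rewrite /LopN inordK //.
by congr thetas; apply: functional_extensionality => i; rewrite fextE.
Qed.

Lemma dsumBig N T x m : (N < m)%N -> dsum_id (N:=N) T x m = x m.
Proof. by move=> h; rewrite /dsum_id leqNgt h. Qed.

End S.

Ltac oddify := repeat match goal with
 | H : context[odd ?t] |- _ => move: H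
 | |- context[odd ?t] => have := odd_double_half t; case: (odd t) => /=
 end; intros.


Lemma oddPred n : (0 < n)%N -> odd n.-1 = ~~ odd n.
Proof. by case: n => // n _; rewrite /= negbK. Qed.
Ltac rwpred := repeat match goal with |- context[odd (?t.-1)] => rewrite (@oddPred t); last lia end.
Ltac rwp := rwpred; repeat match goal with H : odd ?t = _ |- context[odd ?t] => rewrite H end.
Ltac sb := solve [rewrite /= ?addnS ?addSn ?addn0 ?addKn ?oddS ?oddD; rwp; rewrite /=; first [done | lia]].

Ltac evth := match goal with |- context[thetas ?A ?P ?y ?n] =>
  let h := fresh "h" in let h2 := fresh "h" in let h3 := fresh "h" in
  first [ (assert (h : P n) by sb); rewrite (@thP _ _ A P y n h); clear h
        | (assert (h : ~~ P n) by sb);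
          first [ (assert (h2 : (0 < n)%N && P n.-1) by sb); move/andP: h2 => [h2 h3];
                  rewrite (@thQ _ _ A P y n h h2 h3); clear h h2 h3
                | (assert (h2 : ~~ ((0 < n)%N && P n.-1)) by sb);
                  rewrite (@thI _ _ A P y n h h2); clear h h2 ] ] end.

Ltac evds := match goal with
 | |- context[dsum_id (CMVN (N:=?N) ?al) ?y ?n] =>
   let h := fresh "h" in first [ (assert (h : (n <= N)%N) by sb); rewrite (@dsumN _ _ N al y n h)
                               | (assert (h : (N < n)%N) by sb); rewrite (@dsumBig _ _ N _ y n h)]; clear h
 | |- context[dsum_id (CMVNhat (N:=?N) ?al) ?y ?n] =>
   let h := fresh "h" in first [ (assert (h : (n <= N)%N) by sb); rewrite (@dsumNh _ _ N al y n h)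
                               | (assert (h : (N < n)%N) by sb); rewrite (@dsumBig _ _ N _ y n h)]; clear h
 end.

Ltac evif := match goal with |- context[if ?b then _ else _] =>
   let h := fresh "h" in first [ (assert (h : b) by sb); rewrite h; clear h
                               | (assert (h : ~~ b) by sb); rewrite (negbTE h); clear h] end.

Ltac nh h := move: h; rewrite /= ?addnS ?addSn ?addn0 ?addKn ?oddS ?oddD; rwp; rewrite /= => h.
Ltac splitb := match goal with |- context[thetas ?A ?P ?y ?n] =>
  let h := fresh "hs" in
  first [ (assert (h : P n) by sb); fail 1
        | (assert (h : ~~ P n) by sb); clear h;
          first [ (assert (h : (0 < n)%N) by sb); fail 1
                | (assert (h : ~~ (0 < n)%N) by sb); fail 1
                | have [h|h] := boolP (0 < n)%N ]
        | (assert (h : ~~ P n) by sb); clear h;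
          have [h|h] := boolP ((0 < n)%N && P n.-1); nh h
        | have [h|h] := boolP (P n); nh h ] end.
Ltac step := first [evds | evth | evif | splitb]; cbv beta; try (exfalso; lia).


Theorem proposition4p1 (R : realType) (d : nat) (hd : (0 < d)%N)
    (al : nat -> 'M[R[i]]_d) (hal : forall n, opnorm_lt1 (al n)) (j : nat) :
  (forall x : blockseq R d,
     CMV al x =
     (if ~~ odd j
      then id_dsum j (CMV (shift j al)) (dsum_id (CMVN (N:=j) al) x)
      else dsum_id (CMVN (N:=j) al) (id_dsum j (CMVhat (shift j al)) x)))
  /\
  (forall x : blockseq R d,
     CMVhat al x =
     (if ~~ odd j
      then dsum_id (CMVNhat (N:=j) al) (id_dsum j (CMVhat (shift j al)) x)
      else id_dsum j (CMV (shift j al)) (dsum_id (CMVNhat (N:=j) al) x))).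
Proof.
split=> x; apply: functional_extensionality => m; case Hj: (odd j);
rewrite /= /CMV /CMVhat /Lop /Mop /id_dsum /shift.
all: have [hm|hm] := ltnP m j; [ case: m hm => [|[|m]] hm
   | move: (subnKC hm) => {hm}; move: (m - j)%N => k E; subst m; case: k => [|[|k]] ].
all: try (case Hp: (odd m)); try (case Hp: (odd k)).
all: repeat step.
all: do 2 (rewrite ?addKn ?addnS ?addn0 ?succnK; repeat match goal with |- context[(?b + (?a - ?b))%N] => rewrite (@subnKC b a); [|lia] end).
all: try (match goal with |- ?a = ?a => reflexivity end).
Qed.
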